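(* Let $a<0$, $b>0$, $c\in(0,1)$, $d>0$, and set $\pi_0=bd(1-c)^a/(1+bd(1-c)^a)$. (i) If $Z\sim\mathrm{NB}(\pi_0,1/d)$ and $W_1,W_2,\dots$ are i.i.d. $\mathrm{NB}(c,-a)$ independent of $Z$, then $\sum_{i=1}^Z W_i\sim\mathrm{TDL}(a,b,c,d)$. (ii) If $Z\sim\mathrm{NB}(\pi_0,1/d)$ and, conditionally on $Z$, $X\sim\mathrm{NB}(c,-aZ)$ (point mass at $0$ when $Z=0$), then $X\sim\mathrm{TDL}(a,b,c,d)$. (iii) Let $G_1$ be Gamma with Laplace transform $(1+bd(1-c)^a t)^{-1/d}$; conditionally on $G_1$ let $N$ be Poisson with mean $G_1$; conditionally on $(G_1,N)$ let $G_2$ be Gamma with scale $c/(1-c)$ and shape $-aN$ (Laplace transform $(1+ct/(1-c))^{aN}$, point mass at $0$ if $N=0$); conditionally on $(G_1,N,G_2)$ let $X$ be Poisson with mean $G_2$. Then $X\sim\mathrm{TDL}(a,b,c,d)$.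
   Context: $\mathrm{NB}(\pi,\delta)$, $\pi\in(0,1)$, $\delta>0$: law on $\mathbb{N}$ with pgf $((1-\pi)/(1-\pi s))^\delta$. $\mathrm{TDL}(a,b,c,d)$: law on $\mathbb{N}$ with pgf $\big(1+\operatorname{sgn}(a)\,b\,d\,((1-cs)^a-(1-c)^a)\big)^{-1/d}$, $s\in[0,1]$, where $\operatorname{sgn}$ is the sign function (so $\operatorname{sgn}(a)=-1$ here). An empty sum equals $0$. *)

(* Defs.v *)
From Stdlib Require Import Reals Arith Factorial.
Open Scope R_scope.

Fixpoint rising (x : R) (k : nat) : R :=
  match k with
  | O => 1
  | S k' => rising x k' * (x + INR k')
  end.

(* pmf of NB(p, delta): pgf ((1-p)/(1-p s))^delta.
   For delta = 0 this is the point mass at 0. *)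
Definition nb_pmf (p delta : R) (k : nat) : R :=
  rising delta k / INR (fact k) * Rpower (1 - p) delta * p ^ k.

Definition poisson_pmf (m : R) (k : nat) : R :=
  exp (- m) * m ^ k / INR (fact k).

Definition dirac0 (k : nat) : R := if Nat.eqb k 0 then 1 else 0.

Definition conv (p q : nat -> R) (k : nat) : R :=
  sum_f_R0 (fun j => p j * q (k - j)%nat) k.

(* n-fold convolution power: law of W_1 + ... + W_n, W_i iid with pmf p *)
Fixpoint convpow (p : nat -> R) (n : nat) : nat -> R :=
  match n with
  | O => dirac0
  | S n' => conv p (convpow p n')
  end.

Definition sgn (x : R) : R :=
  if Rlt_dec x 0 then -1 else if Rlt_dec 0 x then 1 else 0.

Definition tdl_pgf (a b c d s : R) : R :=
  Rpower (1 + sgn a * b * d * (Rpower (1 - c * s) a - Rpower (1 - c) a)) (- (1 / d)).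

Definition pi0 (a b c d : R) : R :=
  b * d * Rpower (1 - c) a / (1 + b * d * Rpower (1 - c) a).

Definition has_pgf (p : nat -> R) (G : R -> R) : Prop :=
  forall s, 0 <= s <= 1 -> infinite_sum (fun k => p k * s ^ k) (G s).

Definition improper_int0 (f : R -> R) (l : R) : Prop :=
  forall eps, eps > 0 ->
    exists delta, delta > 0 /\ exists M, M > 0 /\
      forall u v, 0 < u < delta -> M < v ->
        exists pr : Riemann_integrable f u v, Rabs (RiemannInt pr - l) < eps.

Definition density_with_laplace (f : R -> R) (L : R -> R) : Prop :=
  (forall x, 0 < x -> 0 <= f x) /\
  (forall t, 0 <= t -> improper_int0 (fun x => exp (- (t * x)) * f x) (L t)).

(* Main.v *)
Require Import Defs.
From Stdlib Require Import Reals.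
From Stdlib Require Import Lra Lia Arith Factorial ZArith.
From Coquelicot Require Import Coquelicot.
From Stdlib Require Import ClassicalEpsilon.
Open Scope R_scope.


Definition cc (x : R) (k : nat) : R := rising x k / INR (fact k).

Lemma INR_fact_pos k : 0 < INR (fact k).
Proof. apply lt_0_INR, lt_O_fact. Qed.

Lemma rising_pos x k : 0 < x -> 0 < rising x k.
Proof. intros Hx; induction k; simpl. lra. apply Rmult_lt_0_compat; auto. pose proof (pos_INR k); lra. Qed.

Lemma cc_pos x k : 0 < x -> 0 < cc x k.
Proof. intros; unfold cc. apply Rdiv_lt_0_compat. now apply rising_pos. apply INR_fact_pos. Qed.

Lemma cc_S x k : INR (S k) * cc x (S k) = (x + INR k) * cc x k.
Proof.
  unfold cc. simpl rising. rewrite fact_simpl, mult_INR.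
  pose proof (INR_fact_pos k). assert (0 < INR (S k)) by (apply lt_0_INR; lia).
  field. lra.
Qed.

Lemma cc_radius x : 0 < x -> CV_radius (cc x) = 1.
Proof.
  intros Hx. replace 1 with (/ 1) by field.
  apply CV_radius_finite_DAlembert. intros n; pose proof (cc_pos x n Hx); lra. lra.
  apply is_lim_seq_Reals. intros eps Heps.
  destruct (archimed (Rabs (x - 1) / eps)) as [H1 _].
  assert (Hz: (0 <= Z.to_nat (up (Rabs (x - 1) / eps)))%nat) by lia.
  exists (Z.to_nat (up (Rabs (x - 1) / eps))). intros n Hn.
  assert (HS : 0 < INR (S n)) by (apply lt_0_INR; lia).
  assert (E : cc x (S n) / cc x n = (x + INR n) / INR (S n)).
  { pose proof (cc_S x n). pose proof (cc_pos x n Hx).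
    assert (E2 : cc x (S n) = (x + INR n) * cc x n / INR (S n)).
    { rewrite <- H. field. lra. }
    rewrite E2. field. lra. }
  rewrite E. unfold R_dist. rewrite S_INR in *.
  assert (0 < (x + INR n) / (INR n + 1)).
  { apply Rdiv_lt_0_compat; auto. pose proof (pos_INR n); lra. }
  rewrite (Rabs_pos_eq ((x + INR n) / (INR n + 1))) by lra.
  replace ((x + INR n) / (INR n + 1) - 1) with ((x - 1) / (INR n + 1)) by (field; lra).
  rewrite Rabs_div by lra. rewrite (Rabs_pos_eq (INR n + 1)) by lra.
  apply Rlt_div_l; auto.
  assert (INR (Z.to_nat (up (Rabs (x - 1) / eps))) <= INR n) by (apply le_INR; lia).
  rewrite INR_IZR_INZ, Z2Nat.id in H0.
  2:{ apply le_IZR. pose proof (Rabs_pos (x-1)). assert (0 <= Rabs (x - 1) / eps).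
      apply Rdiv_le_0_compat; lra. simpl; lra. }
  assert (Rabs (x - 1) < eps * INR n + eps); [|lra].
  assert (Rabs (x - 1) / eps * eps = Rabs (x-1)) by (field; lra).
  assert (Rabs (x - 1) / eps * eps < (INR n + 1) * eps) by (apply Rmult_lt_compat_r; lra).
  nra.
Qed.
Lemma PSd_eq x k : PS_derive (cc x) k = PS_plus (PS_scal x (cc x)) (PS_incr_1 (PS_derive (cc x))) k.
Proof.
  unfold PS_derive, PS_plus, PS_scal, PS_incr_1. rewrite cc_S.
  destruct k as [|k]; unfold plus, scal, zero, mult; simpl; match goal with |- ?a = ?b => change (@eq R a b) end.
  - change (@mult _ x (cc x O)) with (x * cc x O). ring.
  - change (match k with 0%nat => 1 | S _ => INR k + 1 end) with (INR (S k)).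
    change (@mult _ x (cc x (S k))) with (x * cc x (S k)). ring.
Qed.

Lemma binom x t : 0 < x -> -1 < t < 1 -> PSeries (cc x) t = Rpower (1 - t) (- x).
Proof.
  intros Hx Ht.
  assert (Hr : forall y, -1 < y < 1 -> Rbar_lt (Rabs y) (CV_radius (cc x))).
  { intros y Hy. rewrite cc_radius by auto. simpl. unfold Rabs; destruct Rcase_abs; lra. }
  set (g := PSeries (cc x)).
  assert (HD : forall y, -1 < y < 1 -> PSeries (PS_derive (cc x)) y * (1 - y) = x * g y).
  { intros y Hy.
    assert (E : PSeries (PS_derive (cc x)) y = x * g y + y * PSeries (PS_derive (cc x)) y).
    { rewrite (PSeries_ext _ _ y (PSd_eq x)) at 1. rewrite PSeries_plus.
      rewrite PSeries_scal, PSeries_incr_1. reflexivity.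
      apply ex_pseries_scal. apply Rmult_comm. apply CV_radius_inside; auto.
      apply ex_pseries_incr_1. apply ex_pseries_derive; auto. }
    lra. }
  set (h := fun y => g y * exp (x * ln (1 - y))).
  assert (Hh : forall y, -1 < y < 1 -> is_derive h y 0).
  { intros y Hy.
    assert (Hg := is_derive_PSeries (cc x) y (Hr y Hy)).
    unfold h.
    evar (dd : R).
    assert (is_derive (fun y0 : R => exp (x * ln (1 - y0))) y dd).
    { auto_derive. lra. subst dd. reflexivity. }
    subst dd.
    replace 0 with (PSeries (PS_derive (cc x)) y * exp (x * ln (1 - y)) + g y * (x * (-1 * / (1 - y)) * exp (x * ln (1-y)))).
    apply (is_derive_mult g (fun y0 => exp (x * ln (1 - y0)))); auto.
    intros; apply Rmult_comm.
    pose proof (HD y Hy). set (D := PSeries (PS_derive (cc x)) y) in *.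
    set (e := exp (x * ln (1 - y))).
    transitivity (e * / (1-y) * (D*(1-y) - x*g y)). field. lra.
    rewrite H0. ring. }
  assert (Hc : forall y, -1 < y < 1 -> h y = h 0).
  { intros y Hy.
    destruct (MVT_gen h 0 y (fun _ => 0)) as [c [Hc1 Hc2]].
    - intros z Hz. apply Hh. unfold Rmin, Rmax in Hz; destruct Rle_dec; lra.
    - intros z Hz. apply continuity_pt_filterlim. apply (ex_derive_continuous h).
      eexists. apply Hh. unfold Rmin, Rmax in Hz; destruct Rle_dec; lra.
    - lra. }
  assert (H0 : h 0 = 1).
  { unfold h, g. rewrite PSeries_0. unfold cc; simpl. rewrite Rminus_0_r, ln_1. rewrite Rmult_0_r, exp_0. field. }
  specialize (Hc t Ht). rewrite H0 in Hc. unfold h in Hc.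
  unfold Rpower. rewrite Ropp_mult_distr_l_reverse, exp_Ropp.
  fold g. apply Rmult_eq_reg_r with (exp (x * ln (1 - t))). rewrite Hc. field.
  all: pose proof (exp_pos (x * ln (1 - t))); lra.
Qed.
Lemma is_pseries_inf a x l : is_pseries a x l -> infinite_sum (fun k => a k * x ^ k) l.
Proof.
  intros H. apply is_series_Reals. eapply is_series_ext; [|exact H].
  intros n. simpl. rewrite pow_n_pow. unfold scal; simpl. change (@mult _ (x ^ n) (a n)) with (x ^ n * a n). ring.
Qed.

Lemma inf_scal a l c : infinite_sum a l -> infinite_sum (fun n => c * a n) (c * l).
Proof.
  intros H. apply is_series_Reals. apply is_series_Reals in H.
  apply (is_series_scal_l c) in H. exact H.
Qed.

Lemma inf_ext a b l : (forall n, a n = b n) -> infinite_sum a l -> infinite_sum b l.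
Proof.
  intros E H. apply is_series_Reals. apply is_series_Reals in H. eapply is_series_ext; eauto.
Qed.

Lemma rising0 k : rising 0 (S k) = 0.
Proof. induction k. simpl. ring. simpl rising. simpl in IHk. rewrite IHk. ring. Qed.

Lemma nb0 p k : nb_pmf p 0 k = dirac0 k.
Proof.
  unfold nb_pmf, dirac0, Rpower. rewrite Rmult_0_l, exp_0.
  destruct k. simpl. field. rewrite rising0. replace (Nat.eqb (S k) 0) with false by reflexivity. unfold Rdiv; ring.
Qed.

Lemma dirac0_pgf s : infinite_sum (fun k => dirac0 k * s ^ k) 1.
Proof.
  intros eps Heps. exists O. intros n _. unfold R_dist.
  replace (sum_f_R0 (fun k => dirac0 k * s ^ k) n) with 1. rewrite Rminus_diag, Rabs_R0; lra.
  induction n. simpl. unfold dirac0; simpl. ring. simpl. rewrite <- IHn. unfold dirac0. simpl. ring.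
Qed.

Lemma Rpower_div_eq p q d : 0 < p -> 0 < q -> Rpower p d * Rpower q (- d) = Rpower (p / q) d.
Proof.
  intros. unfold Rpower. rewrite <- exp_plus, ln_div by auto. f_equal. ring.
Qed.

Lemma nb_pgf p d s : 0 < p < 1 -> 0 <= d -> 0 <= s <= 1 ->
  infinite_sum (fun k => nb_pmf p d k * s ^ k) (Rpower ((1 - p) / (1 - p * s)) d).
Proof.
  intros Hp Hd Hs. destruct Hd as [Hd|Hd].
  - assert (Hb := binom d (p * s) Hd ltac:(nra)).
    assert (Hi : is_pseries (cc d) (p * s) (PSeries (cc d) (p * s))).
    { apply PSeries_correct, CV_radius_inside. rewrite cc_radius by auto. simpl.
      rewrite Rabs_pos_eq by nra. nra. }
    apply is_pseries_inf in Hi. rewrite Hb in Hi.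
    apply (inf_scal _ _ (Rpower (1 - p) d)) in Hi.
    rewrite Rpower_div_eq in Hi by nra.
    eapply inf_ext; [|exact Hi]. intros n. unfold nb_pmf, cc. rewrite Rpow_mult_distr. ring.
  - subst d. unfold Rpower at 1. rewrite Rmult_0_l, exp_0.
    eapply inf_ext; [|apply (dirac0_pgf s)]. intros n; rewrite nb0; auto.
Qed.

Lemma series_nonneg_partial a l : (forall n, 0 <= a n) -> infinite_sum a l ->
  forall N, sum_f_R0 a N <= l.
Proof.
  intros Ha H N. apply growing_ineq; auto. intros n. simpl. specialize (Ha (S n)). lra.
Qed.

Lemma term_le_partial a N : (forall n, 0 <= a n) -> a N <= sum_f_R0 a N.
Proof.
  intros Ha. destruct N. simpl; lra. simpl. pose proof (cond_pos_sum a N Ha). lra.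
Qed.

Lemma cc_mult x y k : 0 < x -> 0 < y -> PS_mult (cc x) (cc y) k = cc (x + y) k.
Proof.
  intros Hx Hy.
  assert (Hr : forall z, 0 < z -> forall t, -1 < t < 1 -> Rbar_lt (Rabs t) (CV_radius (cc z))).
  { intros z Hz t Ht. rewrite cc_radius by auto. simpl. unfold Rabs; destruct Rcase_abs; lra. }
  apply PSeries_ext_recip.
  - apply Rbar_lt_le_trans with (Finite (1/2)). simpl; lra.
    apply (proj1 (CV_radius_bounded _)).
    assert (Hm := ex_pseries_mult (cc x) (cc y) (1/2) (Hr x Hx (1/2) ltac:(lra)) (Hr y Hy (1/2) ltac:(lra))).
    apply PSeries_correct, is_pseries_inf in Hm.
    exists (PSeries (PS_mult (cc x) (cc y)) (1 / 2)). intros n.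
    assert (Hnn : forall m, 0 <= PS_mult (cc x) (cc y) m * (1/2) ^ m).
    { intros m. apply Rmult_le_pos. unfold PS_mult. apply cond_pos_sum. intros j.
      pose proof (cc_pos x j Hx); pose proof (cc_pos y (m - j) Hy); nra.
      apply pow_le; lra. }
    rewrite Rabs_pos_eq by auto.
    eapply Rle_trans. apply (term_le_partial _ n Hnn). eapply series_nonneg_partial; eauto.
  - rewrite cc_radius. simpl; lra. lra.
  - exists (mkposreal (1/2) ltac:(lra)). intros t Ht.
    assert (Ht' : Rabs t < 1/2).
    { unfold ball in Ht; simpl in Ht. unfold AbsRing_ball, abs, minus, plus, opp in Ht; simpl in Ht.
      rewrite Ropp_0, Rplus_0_r in Ht. exact Ht. }
    assert (Ht2 : -1 < t < 1) by (unfold Rabs in Ht'; destruct Rcase_abs; lra).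
    rewrite PSeries_mult by (apply Hr; auto).
    rewrite !binom by (auto; lra). rewrite <- Rpower_plus. f_equal. ring.
Qed.

Lemma conv_dirac p k : conv p dirac0 k = p k.
Proof.
  unfold conv. destruct k. simpl. unfold dirac0; simpl. ring.
  simpl sum_f_R0. rewrite Nat.sub_diag. unfold dirac0 at 2. simpl Nat.eqb.
  rewrite (sum_eq _ (fun _ => 0)). rewrite sum_cte. ring.
  intros i Hi. change (match i with 0%nat => S k | S l => (k - l)%nat end) with (S k - i)%nat.
  replace (S k - i)%nat with (S (k - i)) by lia. unfold dirac0. simpl. ring.
Qed.

Lemma conv_nb c x y k : 0 < c < 1 -> 0 < x -> 0 < y ->
  conv (nb_pmf c x) (nb_pmf c y) k = nb_pmf c (x + y) k.
Proof.
  intros Hc Hx Hy. unfold conv.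
  rewrite (sum_eq _ (fun j => (cc x j * cc y (k - j)) * (Rpower (1 - c) x * Rpower (1 - c) y * c ^ k))).
  - rewrite <- scal_sum. change (sum_f_R0 (fun i => cc x i * cc y (k - i)) k) with (PS_mult (cc x) (cc y) k).
    rewrite cc_mult by auto. unfold nb_pmf, cc. rewrite Rpower_plus. ring.
  - intros i Hi. unfold nb_pmf, cc.
    replace (c ^ k) with (c ^ i * c ^ (k - i)). ring.
    rewrite <- pow_add. f_equal. lia.
Qed.

Lemma convpow_nb c d n k : 0 < c < 1 -> 0 < d -> convpow (nb_pmf c d) n k = nb_pmf c (d * INR n) k.
Proof.
  intros Hc Hd. revert k. induction n; intros k.
  - simpl. rewrite Rmult_0_r, nb0. reflexivity.
  - simpl convpow. unfold conv at 1.
    rewrite (sum_eq _ (fun j => nb_pmf c d j * nb_pmf c (d * INR n) (k - j))) by (intros; rewrite IHn; auto).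
    change (sum_f_R0 (fun j => nb_pmf c d j * nb_pmf c (d * INR n) (k - j)) k) with (conv (nb_pmf c d) (nb_pmf c (d * INR n)) k).
    destruct n.
    + simpl INR. rewrite Rmult_0_r.
      unfold conv. rewrite (sum_eq _ (fun j => nb_pmf c d j * dirac0 (k - j))) by (intros; rewrite nb0; auto).
      change (sum_f_R0 (fun j => nb_pmf c d j * dirac0 (k - j)) k) with (conv (nb_pmf c d) dirac0 k).
      rewrite conv_dirac. rewrite Rmult_1_r. reflexivity.
    + rewrite conv_nb; auto. f_equal. rewrite (S_INR (S n)). ring.
      apply Rmult_lt_0_compat; auto. apply lt_0_INR; lia.
Qed.


Lemma lim_le u l M : Un_cv u l -> (forall n, u n <= M) -> l <= M.
Proof.
  intros H Hu. destruct (Rle_dec l M) as [|Hn]; auto. exfalso.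
  destruct (H (l - M)) as [N HN]. lra.
  specialize (HN N (Nat.le_refl N)). specialize (Hu N). unfold R_dist in HN.
  unfold Rabs in HN; destruct Rcase_abs in HN; lra.
Qed.

Lemma nonneg_cv a M : (forall n, 0 <= a n) -> (forall N, sum_f_R0 a N <= M) ->
  exists l, infinite_sum a l /\ l <= M.
Proof.
  intros Ha Hb. destruct (growing_cv (sum_f_R0 a)) as [l Hl].
  - intros n. simpl. specialize (Ha (S n)). lra.
  - exists M. intros x [i ->]. auto.
  - exists l. split; auto. eapply lim_le; eauto.
Qed.

Lemma inf_sum_finite (b : nat -> nat -> R) C K :
  (forall j, infinite_sum (fun n => b n j) (C j)) ->
  infinite_sum (fun n => sum_f_R0 (fun j => b n j) K) (sum_f_R0 C K).
Proof.
  intros H. induction K.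
  - simpl. apply H.
  - simpl. unfold infinite_sum.
    assert (E : forall N, sum_f_R0 (fun n => sum_f_R0 (fun j => b n j) K + b n (S K)) N =
               sum_f_R0 (fun n => sum_f_R0 (fun j => b n j) K) N + sum_f_R0 (fun n => b n (S K)) N).
    { intros; apply plus_sum. }
    intros eps Heps. destruct (CV_plus _ _ _ _ IHK (H (S K)) eps Heps) as [N HN].
    exists N. intros n Hn. rewrite E. apply HN; auto.
Qed.

Lemma sum_swap (b : nat -> nat -> R) N K :
  sum_f_R0 (fun k => sum_f_R0 (fun n => b n k) N) K = sum_f_R0 (fun n => sum_f_R0 (fun k => b n k) K) N.
Proof.
  induction K.
  - simpl. reflexivity.
  - simpl. rewrite IHK. rewrite <- plus_sum. reflexivity.
Qed.

Lemma tonelli (b : nat -> nat -> R) Rw T C :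
  (forall n k, 0 <= b n k) ->
  (forall n, infinite_sum (fun k => b n k) (Rw n)) -> infinite_sum Rw T ->
  (forall k, infinite_sum (fun n => b n k) (C k)) -> infinite_sum C T.
Proof.
  intros Hb HR HT HC.
  assert (HRn : forall n, 0 <= Rw n).
  { intros n. eapply Rle_trans; [|apply (series_nonneg_partial _ _ (Hb n) (HR n) 0)]. simpl; auto. }
  assert (HCn : forall k, 0 <= C k).
  { intros k. eapply Rle_trans; [|apply (series_nonneg_partial _ _ (fun n => Hb n k) (HC k) 0)]. simpl; auto. }
  destruct (nonneg_cv C T HCn) as [S [HS HST]].
  - intros K. assert (Hf := inf_sum_finite (fun n j => b n j) C K HC).
    apply (lim_le _ _ _ Hf). intros N.
    eapply Rle_trans; [|apply (series_nonneg_partial _ _ HRn HT N)].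
    apply sum_Rle. intros n _. apply (series_nonneg_partial _ _ (Hb n) (HR n)).
  - assert (T <= S).
    { apply (lim_le _ _ _ HT). intros N.
      assert (Hf := inf_sum_finite (fun k n => b n k) Rw N HR).
      apply (lim_le _ _ _ Hf). intros K.
      cbv beta.
      eapply Rle_trans; [|apply (series_nonneg_partial _ _ HCn HS K)].
      apply sum_Rle. intros k _. apply (series_nonneg_partial _ _ (fun n => Hb n k) (HC k)). }
    replace T with S by lra. auto.
Qed.

Lemma comparison a b lb : (forall n, 0 <= a n <= b n) -> infinite_sum b lb -> exists la, infinite_sum a la.
Proof.
  intros H Hb. destruct (nonneg_cv a lb) as [l [Hl _]].
  - intros n; apply H.
  - intros N. eapply Rle_trans; [|apply (series_nonneg_partial b lb)]; auto.
    apply sum_Rle; intros; apply H. intros n; specialize (H n); lra.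
  - eauto.
Qed.

Lemma mixture (pN : nat -> R) (PN : R -> R) (q : nat -> nat -> R) (Y : R -> R) :
  (forall n, 0 <= pN n) ->
  (forall y, 0 <= y <= 1 -> infinite_sum (fun n => pN n * y ^ n) (PN y)) ->
  (forall n k, 0 <= q n k) ->
  (forall n s, 0 <= s <= 1 -> infinite_sum (fun k => q n k * s ^ k) (Y s ^ n)) ->
  (forall s, 0 <= s <= 1 -> 0 <= Y s <= 1) ->
  exists pX, (forall k, infinite_sum (fun n => pN n * q n k) (pX k)) /\
    (forall s, 0 <= s <= 1 -> infinite_sum (fun k => pX k * s ^ k) (PN (Y s))).
Proof.
  intros HpN HPN Hq HY HY01.
  assert (Hq1 : forall n k, q n k <= 1).
  { intros n k. assert (H := HY n 1 ltac:(lra)).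
    assert (H2 := series_nonneg_partial _ _ (fun k => Rmult_le_pos _ _ (Hq n k) (pow_le 1 k ltac:(lra))) H k).
    assert (H3 := term_le_partial (fun k => q n k * 1 ^ k) k (fun k => Rmult_le_pos _ _ (Hq n k) (pow_le 1 k ltac:(lra)))).
    cbv beta in H3. rewrite pow1 in H3. rewrite Rmult_1_r in H3.
    assert (Y 1 ^ n <= 1). { pose proof (pow_incr (Y 1) 1 n (HY01 1 ltac:(lra))) as HH. rewrite pow1 in HH. exact HH. } lra. }
  assert (HN1 := HPN 1 ltac:(lra)).
  assert (Hex : forall k, exists l, infinite_sum (fun n => pN n * q n k) l).
  { intros k. apply (comparison _ (fun n => pN n * 1 ^ n) (PN 1)); auto.
    intros n. rewrite pow1. split. apply Rmult_le_pos; auto. specialize (Hq1 n k). specialize (HpN n). nra. }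
  exists (fun k => proj1_sig (constructive_indefinite_description _ (Hex k))).
  split.
  - intros k. destruct (constructive_indefinite_description _ (Hex k)); auto.
  - intros s Hs.
    apply (tonelli (fun n k => pN n * q n k * s ^ k) (fun n => pN n * Y s ^ n)).
    + intros n k. apply Rmult_le_pos. apply Rmult_le_pos; auto. apply pow_le; lra.
    + intros n. eapply inf_ext; [|apply (inf_scal _ _ (pN n) (HY n s Hs))]. intros k; simpl; ring.
    + apply HPN, HY01, Hs.
    + intros k. destruct (constructive_indefinite_description _ (Hex k)) as [l Hl]. simpl.
      replace (l * s ^ k) with (s ^ k * l) by ring.
      eapply inf_ext; [|apply (inf_scal _ _ (s ^ k) Hl)]. intros n; simpl; ring.
Qed.


Lemma exp_le' x y : x <= y -> exp x <= exp y.
Proof. intros [H|H]. left; apply exp_increasing; auto. subst; lra. Qed.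

Lemma ln_le' x y : 0 < x -> x <= y -> ln x <= ln y.
Proof. intros Hx [H|H]. left; apply ln_increasing; auto. subst; lra. Qed.

Lemma Rpower_pos x y : 0 < Rpower x y.
Proof. unfold Rpower; apply exp_pos. Qed.

Lemma rising_nonneg x k : 0 <= x -> 0 <= rising x k.
Proof. intros Hx; induction k; simpl. lra. apply Rmult_le_pos; auto. pose proof (pos_INR k); lra. Qed.

Lemma nb_nonneg p d k : 0 <= p -> 0 <= d -> 0 <= nb_pmf p d k.
Proof.
  intros Hp Hd. unfold nb_pmf. apply Rmult_le_pos. apply Rmult_le_pos.
  apply Rdiv_le_0_compat. apply rising_nonneg; auto. apply INR_fact_pos.
  left; apply Rpower_pos. apply pow_le; auto.
Qed.

Lemma Rpower_inv z y : 0 < z -> Rpower (/ z) y = Rpower z (- y).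
Proof. intros. unfold Rpower. rewrite ln_Rinv by auto. f_equal. ring. Qed.

Section Alg.
Variables a b c d : R.
Hypothesis Ha : a < 0.
Hypothesis Hb : 0 < b.
Hypothesis Hc : 0 < c < 1.
Hypothesis Hd : 0 < d.

Definition BB := b * d * Rpower (1 - c) a.
Definition YY (s : R) := Rpower ((1 - c) / (1 - c * s)) (- a).

Lemma BB_pos : 0 < BB.
Proof. unfold BB. pose proof (Rpower_pos (1-c) a). apply Rmult_lt_0_compat; auto. nra. Qed.

Lemma YY01 s : 0 <= s <= 1 -> 0 <= YY s <= 1.
Proof.
  intros Hs. unfold YY. split. left; apply Rpower_pos.
  unfold Rpower. replace 1 with (exp 0) at 3 by apply exp_0. apply exp_le'.
  assert (ln ((1 - c) / (1 - c * s)) <= 0).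
  { rewrite <- ln_1. apply ln_le'. apply Rdiv_lt_0_compat; nra.
    apply Rmult_le_reg_r with (1 - c * s). nra. unfold Rdiv. rewrite Rmult_assoc, Rinv_l by nra. nra. }
  nra.
Qed.

Lemma BB_YY s : 0 <= s <= 1 -> BB * YY s = b * d * Rpower (1 - c * s) a.
Proof.
  intros Hs. unfold BB, YY. rewrite !Rmult_assoc. f_equal. f_equal.
  unfold Rpower. rewrite <- exp_plus. f_equal. rewrite ln_div by nra. ring.
Qed.

Lemma tdl_eq s : 0 <= s <= 1 -> tdl_pgf a b c d s = Rpower (1 + BB * (1 - YY s)) (- (1 / d)).
Proof.
  intros Hs. unfold tdl_pgf, sgn. destruct (Rlt_dec a 0); [|lra].
  f_equal. pose proof (BB_YY s Hs). unfold BB in *. 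
  replace (b * d * Rpower (1 - c) a * (1 - YY s)) with (b * d * Rpower (1 - c) a - b * d * Rpower (1 - c) a * YY s) by ring.
  rewrite H. ring.
Qed.

Lemma pi0_eq : pi0 a b c d = BB / (1 + BB).
Proof. reflexivity. Qed.

Lemma PN_ii s : 0 <= s <= 1 ->
  Rpower ((1 - pi0 a b c d) / (1 - pi0 a b c d * YY s)) (1 / d) = tdl_pgf a b c d s.
Proof.
  intros Hs. rewrite tdl_eq by auto. rewrite pi0_eq. pose proof BB_pos. pose proof (YY01 s Hs).
  replace ((1 - BB / (1 + BB)) / (1 - BB / (1 + BB) * YY s)) with (/ (1 + BB * (1 - YY s))).
  apply Rpower_inv. nra. field. split; nra.
Qed.

Lemma HY_nb n s : 0 <= s <= 1 ->
  infinite_sum (fun k => nb_pmf c (- a * INR n) k * s ^ k) (YY s ^ n).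
Proof.
  intros Hs. assert (H := nb_pgf c (- a * INR n) s Hc ltac:(pose proof (pos_INR n); nra) Hs).
  replace (YY s ^ n) with (Rpower ((1 - c) / (1 - c * s)) (- a * INR n)); auto.
  rewrite <- Rpower_mult. apply Rpower_pow. apply Rpower_pos.
Qed.

Lemma part_ii : exists pX : nat -> R,
     (forall k, infinite_sum
        (fun n => nb_pmf (pi0 a b c d) (1 / d) n * nb_pmf c (- a * INR n) k) (pX k))
     /\ has_pgf pX (tdl_pgf a b c d).
Proof.
  pose proof BB_pos as HB.
  assert (Hpi : 0 < pi0 a b c d < 1).
  { rewrite pi0_eq. split. apply Rdiv_lt_0_compat; lra. apply Rmult_lt_reg_r with (1 + BB). lra.
    unfold Rdiv. rewrite Rmult_assoc, Rinv_l by lra. lra. }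
  destruct (mixture (nb_pmf (pi0 a b c d) (1 / d))
    (fun y => Rpower ((1 - pi0 a b c d) / (1 - pi0 a b c d * y)) (1 / d))
    (fun n k => nb_pmf c (- a * INR n) k) YY) as [pX [H1 H2]].
  - intros n. apply nb_nonneg. lra. left; apply Rdiv_lt_0_compat; lra.
  - intros y Hy. apply nb_pgf; auto. left; apply Rdiv_lt_0_compat; lra.
  - intros n k. apply nb_nonneg. lra. pose proof (pos_INR n); nra.
  - intros n s Hs. apply HY_nb; auto.
  - apply YY01.
  - exists pX. split; auto. intros s Hs. rewrite <- PN_ii by auto. apply H2; auto.
Qed.

Lemma part_i : exists pS : nat -> R,
     (forall k, infinite_sum
        (fun n => nb_pmf (pi0 a b c d) (1 / d) n * convpow (nb_pmf c (- a)) n k) (pS k))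
     /\ has_pgf pS (tdl_pgf a b c d).
Proof.
  destruct part_ii as [pX [H1 H2]]. exists pX. split; auto.
  intros k. eapply inf_ext; [|apply (H1 k)]. intros n. rewrite convpow_nb; auto. lra.
Qed.

End Alg.


Lemma exR_plus f g u v : ex_RInt f u v -> ex_RInt g u v -> ex_RInt (fun x => f x + g x) u v.
Proof. intros; exact (ex_RInt_plus f g u v H H0). Qed.
Lemma exR_scal f u v k : ex_RInt f u v -> ex_RInt (fun x => k * f x) u v.
Proof. intros; exact (ex_RInt_scal f u v k H). Qed.
Lemma exR_minus f g u v : ex_RInt f u v -> ex_RInt g u v -> ex_RInt (fun x => f x - g x) u v.
Proof. intros; exact (ex_RInt_minus f g u v H H0). Qed.
Lemma RI_plus f g u v : ex_RInt f u v -> ex_RInt g u v -> RInt (fun x => f x + g x) u v = RInt f u v + RInt g u v.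
Proof. intros; exact (RInt_plus f g u v H H0). Qed.
Lemma RI_scal f u v k : ex_RInt f u v -> RInt (fun x => k * f x) u v = k * RInt f u v.
Proof. intros; exact (RInt_scal f u v k H). Qed.
Lemma RI_minus f g u v : ex_RInt f u v -> ex_RInt g u v -> RInt (fun x => f x - g x) u v = RInt f u v - RInt g u v.
Proof. intros; exact (RInt_minus f g u v H H0). Qed.
Lemma RI_chasles f a b c : ex_RInt f a b -> ex_RInt f b c -> RInt f a b + RInt f b c = RInt f a c.
Proof. intros; exact (RInt_Chasles f a b c H H0). Qed.

Lemma exR_sub (f : R -> R) a b c d : a <= c -> c <= d -> d <= b -> ex_RInt f a b -> ex_RInt f c d.
Proof.
  intros H1 H2 H3 H.
  apply (@ex_RInt_Chasles_2 R_CompleteNormedModule f a c d). lra.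
  apply (@ex_RInt_Chasles_1 R_CompleteNormedModule f a d b). lra. exact H.
Qed.

Lemma Int_part_nat (r : R) (m : nat) : INR m < r < INR m + 1 -> Int_part r = Z.of_nat m.
Proof. intros H. symmetry. apply Int_part_spec. rewrite <- INR_IZR_INZ. lra. Qed.

Lemma mul_id (f : R -> R) u v : u < v -> ex_RInt f u v -> ex_RInt (fun x => x * f x) u v.
Proof.
  intros Huv Hf.
  set (ft := fun x => if Rle_dec u x then if Rle_dec x v then f x else 0 else 0).
  assert (Hft : forall x, u <= x <= v -> ft x = f x).
  { intros x Hx. unfold ft. destruct Rle_dec; [|lra]. destruct Rle_dec; [|lra]. auto. }
  destruct (ex_RInt_ub f u v Hf) as [K HK].
  assert (HK' : forall t, Rabs (ft t) <= K).
  { intros t. assert (Hu : Rabs (f u) <= K).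
    { apply (HK u). rewrite Rmin_left, Rmax_right; lra. }
    unfold ft. destruct Rle_dec; [destruct Rle_dec|].
    - apply (HK t). rewrite Rmin_left, Rmax_right; lra.
    - rewrite Rabs_R0. pose proof (Rabs_pos (f u)). lra.
    - rewrite Rabs_R0. pose proof (Rabs_pos (f u)). lra. }
  set (h := fun N : nat => (v - u) / INR (S N)).
  assert (Hh : forall N, 0 < h N).
  { intros N. unfold h. apply Rdiv_lt_0_compat. lra. apply lt_0_INR; lia. }
  set (sN := fun (N : nat) x => u + h N * IZR (Int_part ((x - u) / h N))).
  set (FN := fun (N : nat) x => sN N x * ft x).
  set (G := fun x => x * ft x).
  assert (HA : forall N, ex_RInt (FN N) u v).
  { intros N.
    assert (Hm : forall m, (m <= S N)%nat -> ex_RInt (FN N) u (u + INR m * h N)).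
    { induction m; intros Hm.
      - simpl. rewrite Rmult_0_l, Rplus_0_r. apply ex_RInt_point.
      - assert (Hle : u + INR (S m) * h N <= v).
        { assert (INR (S m) <= INR (S N)) by (apply le_INR; lia).
          assert (E : u + INR (S N) * h N = v). { unfold h. field. apply not_0_INR; lia. }
          pose proof (Hh N). nra. }
        apply ex_RInt_Chasles with (u + INR m * h N). apply IHm; lia.
        rewrite S_INR in *.
        apply ex_RInt_ext with (fun x => (u + h N * INR m) * f x).
        + intros x Hx. rewrite Rmin_left in Hx by (pose proof (Hh N); nra).
          rewrite Rmax_right in Hx by (pose proof (Hh N); nra).
          unfold FN, sN. rewrite Hft by (pose proof (pos_INR m); pose proof (Hh N); nra).
          rewrite (Int_part_nat _ m). rewrite <- INR_IZR_INZ. reflexivity.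
          pose proof (Hh N). split.
          * apply Rmult_lt_reg_r with (h N); auto. unfold Rdiv. rewrite Rmult_assoc, Rinv_l by lra. lra.
          * apply Rmult_lt_reg_r with (h N); auto. unfold Rdiv. rewrite Rmult_assoc, Rinv_l by lra. lra.
        + apply exR_scal.
          apply (exR_sub f u v); auto; pose proof (pos_INR m); pose proof (Hh N); nra. }
    assert (H := Hm (S N) (le_n _)). replace (u + INR (S N) * h N) with v in H. exact H.
    unfold h. field. apply not_0_INR; lia. }
  assert (HB : filterlim (fun N => FN N) eventually (@locally (fct_UniformSpace R R_UniformSpace) G)).
  { apply filterlim_locally. intros eps.
    destruct (archimed ((v - u) * Rabs K / eps)) as [Har _].
    exists (Z.to_nat (up ((v - u) * Rabs K / eps))). intros N HN.
    intros t. change (Rabs (FN N t - G t) < eps).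
    assert (Hx : 0 <= (v - u) * Rabs K / eps).
    { apply Rdiv_le_0_compat. apply Rmult_le_pos. lra. apply Rabs_pos. apply cond_pos. }
    assert (HNr : (v - u) * Rabs K / eps < INR N + 1).
    { assert (INR (Z.to_nat (up ((v - u) * Rabs K / eps))) <= INR N) by (apply le_INR; lia).
      rewrite INR_IZR_INZ, Z2Nat.id in H. lra.
      apply le_IZR. simpl. lra. }
    assert (HhK : h N * Rabs K < eps).
    { unfold h. rewrite S_INR. pose proof (cond_pos eps).
      assert (0 < INR N + 1) by (pose proof (pos_INR N); lra).
      assert ((v - u) * Rabs K < eps * (INR N + 1)).
      { assert ((v - u) * Rabs K / eps * eps = (v - u) * Rabs K) by (field; lra).
        assert ((v - u) * Rabs K / eps * eps < (INR N + 1) * eps) by (apply Rmult_lt_compat_r; lra). nra. }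
      apply Rmult_lt_reg_r with (INR N + 1); auto.
      replace ((v - u) / (INR N + 1) * Rabs K * (INR N + 1)) with ((v - u) * Rabs K) by (field; lra). lra. }
    unfold FN, G. replace (sN N t * ft t - t * ft t) with ((sN N t - t) * ft t) by ring.
    rewrite Rabs_mult.
    destruct (Rle_dec u t) as [H1|H1]; [destruct (Rle_dec t v) as [H2|H2]|].
    + assert (Hs : Rabs (sN N t - t) <= h N).
      { unfold sN. destruct (base_Int_part ((t - u) / h N)) as [B1 B2].
        pose proof (Hh N).
        assert (E : t - u = h N * ((t - u) / h N)) by (field; lra).
        rewrite Rabs_left1.
        - assert (h N * IZR (Int_part ((t - u) / h N)) > h N * ((t - u) / h N) - h N).
          { replace (h N * ((t - u) / h N) - h N) with (h N * ((t - u) / h N - 1)) by ring.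
            apply Rmult_gt_compat_l; lra. }
          lra.
        - assert (h N * IZR (Int_part ((t - u) / h N)) <= h N * ((t - u) / h N)).
          { apply Rmult_le_compat_l; lra. }
          lra. }
      assert (Rabs (ft t) <= Rabs K) by (eapply Rle_trans; [apply HK'|apply RRle_abs]).
      eapply Rle_lt_trans; [|exact HhK]. apply Rmult_le_compat; auto using Rabs_pos.
    + unfold ft. destruct (Rle_dec u t); [|lra]. destruct (Rle_dec t v); [lra|].
      rewrite Rabs_R0, Rmult_0_r. apply cond_pos.
    + unfold ft. destruct (Rle_dec u t); [lra|].
      rewrite Rabs_R0, Rmult_0_r. apply cond_pos. }
  destruct (filterlim_RInt (V := R_CompleteNormedModule) FN u v eventually eventually_filter G (fun N => RInt (FN N) u v)) as [If [_ HI]].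
  - intros N. apply (RInt_correct (V := R_CompleteNormedModule)). apply HA.
  - exact HB.
  - exists If. eapply is_RInt_ext; [|exact HI]. intros x Hx.
    rewrite Rmin_left, Rmax_right in Hx by lra. unfold G. rewrite Hft by lra. reflexivity.
Qed.


Definition IntOK (g : R -> R) := forall u v, 0 < u -> u <= v -> ex_RInt g u v.
Definition conv0 (g : R -> R) (l : R) := forall eps, eps > 0 -> exists dl, dl > 0 /\ exists M, dl < M /\
  forall u v, 0 < u < dl -> M < v -> Rabs (RInt g u v - l) < eps.

Lemma from_improper g l : improper_int0 g l -> IntOK g /\ conv0 g l.
Proof.
  intros H. split.
  - intros u v Hu Huv. destruct (H 1 ltac:(lra)) as [dl [Hdl [M [HM HH]]]].
    destruct (HH (Rmin u (dl/2)) (Rmax v (M+1))) as [pr _].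
    + split. apply Rmin_glb_lt; lra. apply Rle_lt_trans with (dl/2). apply Rmin_r. lra.
    + apply Rlt_le_trans with (M+1). lra. apply Rmax_r.
    + apply ex_RInt_Reals_1 in pr. apply (exR_sub g (Rmin u (dl/2)) (Rmax v (M+1))); auto.
      apply Rmin_l. apply Rmax_l.
  - intros eps Heps. destruct (H eps Heps) as [dl [Hdl [M [HM HH]]]].
    exists (Rmin dl (M/2)). split. apply Rmin_glb_lt; lra.
    exists M. split. apply Rle_lt_trans with (M/2). apply Rmin_r. lra.
    intros u v Hu Hv. destruct (HH u v) as [pr Hpr].
    split. lra. apply Rlt_le_trans with (Rmin dl (M/2)). lra. apply Rmin_l. auto.
    rewrite (RInt_Reals g u v pr). exact Hpr.
Qed.

Lemma to_improper g l : IntOK g -> conv0 g l -> improper_int0 g l.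
Proof.
  intros HI HC eps Heps. destruct (HC eps Heps) as [dl [Hdl [M [HM HH]]]].
  exists dl. split; auto. exists M. split. lra.
  intros u v Hu Hv. assert (Hex : ex_RInt g u v) by (apply HI; lra).
  exists (ex_RInt_Reals_0 _ _ _ Hex). rewrite <- RInt_Reals. apply HH; auto.
Qed.

Definition nonnegf (g : R -> R) := forall x, 0 < x -> 0 <= g x.

Lemma RInt_nonneg g u v : nonnegf g -> IntOK g -> 0 < u -> u <= v -> 0 <= RInt g u v.
Proof. intros Hg HI Hu Huv. apply RInt_ge_0; auto. intros x Hx; apply Hg; lra. Qed.

Lemma RInt_mono g u v u' v' : nonnegf g -> IntOK g -> 0 < u' -> u' <= u -> u <= v -> v <= v' ->
  RInt g u v <= RInt g u' v'.
Proof.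
  intros Hg HI H1 H2 H3 H4.
  rewrite <- (RI_chasles g u' u v'), <- (RI_chasles g u v v'); try (apply HI; lra).
  pose proof (RInt_nonneg g u' u Hg HI H1 H2). pose proof (RInt_nonneg g v v' Hg HI ltac:(lra) H4). lra.
Qed.

Lemma le_lim g l u v : nonnegf g -> IntOK g -> conv0 g l -> 0 < u -> u <= v -> RInt g u v <= l.
Proof.
  intros Hg HI HC Hu Huv. destruct (Rle_dec (RInt g u v) l) as [|Hn]; auto. exfalso.
  destruct (HC (RInt g u v - l)) as [dl [Hdl [M [HM HH]]]]. lra.
  set (u' := Rmin u (dl/2)). set (v' := Rmax v (M+1)).
  assert (Hu' : 0 < u' < dl). { unfold u'. split. apply Rmin_glb_lt; lra. apply Rle_lt_trans with (dl/2). apply Rmin_r. lra. }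
  assert (Hv' : M < v'). { unfold v'. apply Rlt_le_trans with (M+1). lra. apply Rmax_r. }
  specialize (HH u' v' Hu' Hv').
  assert (RInt g u v <= RInt g u' v'). { apply RInt_mono; auto. lra. apply Rmin_l. apply Rmax_l. }
  unfold Rabs in HH; destruct Rcase_abs in HH; lra.
Qed.

Lemma lim_mono g1 g2 l1 l2 : IntOK g1 -> IntOK g2 -> (forall x, 0 < x -> g1 x <= g2 x) ->
  conv0 g1 l1 -> conv0 g2 l2 -> l1 <= l2.
Proof.
  intros H1 H2 Hle C1 C2. destruct (Rle_dec l1 l2) as [|Hn]; auto. exfalso. apply Rnot_le_lt in Hn.
  set (e := (l1 - l2) / 2).
  destruct (C1 e) as [d1 [Hd1 [M1 [HM1 HH1]]]]. unfold e; lra.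
  destruct (C2 e) as [d2 [Hd2 [M2 [HM2 HH2]]]]. unfold e; lra.
  set (u := Rmin d1 d2 / 2). set (v := Rmax M1 M2 + 1).
  assert (Hu1 : 0 < u < d1). { unfold u. pose proof (Rmin_l d1 d2). pose proof (Rmin_glb_lt d1 d2 0 Hd1 Hd2). lra. }
  assert (Hu2 : 0 < u < d2). { unfold u. pose proof (Rmin_r d1 d2). pose proof (Rmin_glb_lt d1 d2 0 Hd1 Hd2). lra. }
  assert (Hv1 : M1 < v). { unfold v. pose proof (Rmax_l M1 M2). lra. }
  assert (Hv2 : M2 < v). { unfold v. pose proof (Rmax_r M1 M2). lra. }
  specialize (HH1 u v Hu1 Hv1). specialize (HH2 u v Hu2 Hv2).
  assert (RInt g1 u v <= RInt g2 u v). { apply RInt_le. lra. apply H1; lra. apply H2; lra. intros x Hx; apply Hle; lra. }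
  unfold Rabs in HH1, HH2; destruct Rcase_abs in HH1; destruct Rcase_abs in HH2; unfold e in *; lra.
Qed.

Lemma lim_exists g K : nonnegf g -> IntOK g -> (forall u v, 0 < u -> u <= v -> RInt g u v <= K) ->
  exists l, conv0 g l /\ 0 <= l.
Proof.
  intros Hg HI HK.
  set (E := fun y => exists u v, 0 < u /\ u <= v /\ y = RInt g u v).
  destruct (completeness E) as [l [Hub Hlub]].
  - exists K. intros y [u [v [Hu [Huv ->]]]]. auto.
  - exists (RInt g 1 1). exists 1, 1. repeat split; lra.
  - exists l. split.
    + intros eps Heps.
      * assert (Hex : exists u0 v0, 0 < u0 /\ u0 <= v0 /\ l - eps < RInt g u0 v0).
        { apply Classical_Prop.NNPP. intros Hn.
          assert (l <= l - eps). { apply Hlub. intros y [u [v [Hu [Huv ->]]]].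
            destruct (Rle_dec (RInt g u v) (l - eps)); auto. exfalso. apply Hn. exists u, v. repeat split; auto; lra. }
          lra. }
        destruct Hex as [u0 [v0 [Hu0 [Huv0 Hlt]]]].
        exists u0. split. lra. exists (v0 + 1). split. lra. intros u v Hu Hv.
        assert (A : RInt g u v <= l) by (apply Hub; exists u, v; repeat split; lra).
        assert (B : RInt g u0 v0 <= RInt g u v) by (apply RInt_mono; auto; lra).
        unfold Rabs; destruct Rcase_abs; lra.
    + apply Rle_trans with (RInt g 1 1). apply RInt_nonneg; auto; lra. apply Hub. exists 1, 1. repeat split; lra.
Qed.

Lemma conv0_plus g1 g2 l1 l2 : IntOK g1 -> IntOK g2 -> conv0 g1 l1 -> conv0 g2 l2 ->
  conv0 (fun x => g1 x + g2 x) (l1 + l2).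
Proof.
  intros H1 H2 C1 C2 eps Heps.
  destruct (C1 (eps/2)) as [d1 [Hd1 [M1 [HM1 HH1]]]]. lra.
  destruct (C2 (eps/2)) as [d2 [Hd2 [M2 [HM2 HH2]]]]. lra.
  exists (Rmin d1 d2). split. apply Rmin_glb_lt; lra.
  exists (Rmax M1 M2). split. pose proof (Rmin_l d1 d2). pose proof (Rmax_l M1 M2). lra.
  intros u v Hu Hv. pose proof (Rmin_l d1 d2). pose proof (Rmin_r d1 d2). pose proof (Rmax_l M1 M2). pose proof (Rmax_r M1 M2).
  rewrite RI_plus by (first [apply H1 | apply H2]; lra).
  specialize (HH1 u v ltac:(lra) ltac:(lra)). specialize (HH2 u v ltac:(lra) ltac:(lra)).
  replace (RInt g1 u v + RInt g2 u v - (l1 + l2)) with ((RInt g1 u v - l1) + (RInt g2 u v - l2)) by ring.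
  eapply Rle_lt_trans. apply Rabs_triang. lra.
Qed.

Lemma conv0_scal g l k : IntOK g -> conv0 g l -> conv0 (fun x => k * g x) (k * l).
Proof.
  intros H C eps Heps.
  destruct (C (eps / (Rabs k + 1))) as [d1 [Hd1 [M1 [HM1 HH1]]]].
  { apply Rdiv_lt_0_compat; auto. pose proof (Rabs_pos k); lra. }
  exists d1. split; auto. exists M1. split; auto. intros u v Hu Hv.
  rewrite RI_scal by (apply H; lra).
  replace (k * RInt g u v - k * l) with (k * (RInt g u v - l)) by ring.
  rewrite Rabs_mult. specialize (HH1 u v Hu Hv).
  pose proof (Rabs_pos k). pose proof (Rabs_pos (RInt g u v - l)).
  apply Rle_lt_trans with ((Rabs k + 1) * Rabs (RInt g u v - l)). nra.
  apply Rmult_lt_reg_l with (/ (Rabs k + 1)). apply Rinv_0_lt_compat; lra.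
  rewrite <- Rmult_assoc, Rinv_l, Rmult_1_l by lra. unfold Rdiv in HH1. lra.
Qed.

Lemma IntOK_plus g1 g2 : IntOK g1 -> IntOK g2 -> IntOK (fun x => g1 x + g2 x).
Proof. intros H1 H2 u v Hu Huv. apply exR_plus; auto. Qed.
Lemma IntOK_scal g k : IntOK g -> IntOK (fun x => k * g x).
Proof. intros H u v Hu Huv. apply exR_scal; auto. Qed.
Lemma IntOK_ext g1 g2 : (forall x, g1 x = g2 x) -> IntOK g1 -> IntOK g2.
Proof. intros E H u v Hu Huv. eapply ex_RInt_ext; [|apply H; eauto]. intros; auto. Qed.
Lemma conv0_ext g1 g2 l : (forall x, g1 x = g2 x) -> conv0 g1 l -> conv0 g2 l.
Proof.
  intros E H eps Heps. destruct (H eps Heps) as [d [Hd [M [HM HH]]]]. exists d; split; auto; exists M; split; auto.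
  intros u v Hu Hv. rewrite <- (RInt_ext g1 g2); auto.
Qed.
Lemma IntOK_mul g : IntOK g -> IntOK (fun x => x * g x).
Proof.
  intros H u v Hu [Huv|Huv]. apply mul_id; auto. apply H; lra. subst. apply ex_RInt_point.
Qed.
Lemma IntOK_pow g n : IntOK g -> IntOK (fun x => x ^ n * g x).
Proof.
  intros H. induction n. apply (IntOK_ext g). intros; simpl; ring. auto.
  apply (IntOK_ext (fun x => x * (x ^ n * g x))). intros; simpl; ring. apply IntOK_mul; auto.
Qed.

Lemma sum_IntOK (F : nat -> R -> R) N : (forall n, IntOK (F n)) -> IntOK (fun x => sum_f_R0 (fun n => F n x) N).
Proof.
  intros H. induction N. simpl. apply H. simpl. apply IntOK_plus; auto.
Qed.

Lemma sum_conv0 (F : nat -> R -> R) lv N : (forall n, IntOK (F n)) -> (forall n, conv0 (F n) (lv n)) ->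
  conv0 (fun x => sum_f_R0 (fun n => F n x) N) (sum_f_R0 lv N).
Proof.
  intros H C. induction N. simpl. apply C. simpl. apply conv0_plus; auto. apply sum_IntOK; auto.
Qed.


Definition ES (N : nat) (y : R) := sum_f_R0 (fun n => y ^ n / INR (fact n)) N.

Lemma exp_series y : infinite_sum (fun n => y ^ n / INR (fact n)) (exp y).
Proof.
  unfold exp. destruct (exist_exp y) as [l Hl]. simpl.
  eapply inf_ext; [|exact Hl]. intros; unfold Rdiv; ring.
Qed.

Lemma ES_terms_nonneg y : 0 <= y -> forall n, 0 <= y ^ n / INR (fact n).
Proof. intros Hy n. apply Rdiv_le_0_compat. apply pow_le; auto. apply INR_fact_pos. Qed.

Lemma ES_le_exp N y : 0 <= y -> ES N y <= exp y.
Proof. intros Hy. apply series_nonneg_partial. apply ES_terms_nonneg; auto. apply exp_series. Qed.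

Lemma term_le_exp n y : 0 <= y -> y ^ n / INR (fact n) <= exp y.
Proof.
  intros Hy. eapply Rle_trans; [|apply (ES_le_exp n y Hy)].
  apply (term_le_partial (fun n => y ^ n / INR (fact n))). apply ES_terms_nonneg; auto.
Qed.

Lemma tail_mono N y z : 0 <= y <= z -> exp y - ES N y <= exp z - ES N z.
Proof.
  intros Hyz.
  assert (Hcv : Un_cv (fun M => ES M z - ES M y) (exp z - exp y)).
  { apply CV_minus; apply exp_series. }
  assert (Hg : Un_growing (fun M => ES M z - ES M y)).
  { intros M. cbv beta. unfold ES. rewrite !tech5.
    assert (y ^ S M / INR (fact (S M)) <= z ^ S M / INR (fact (S M))).
    { unfold Rdiv. apply Rmult_le_compat_r. left; apply Rinv_0_lt_compat, INR_fact_pos.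
      apply pow_incr; lra. }
    lra. }
  pose proof (growing_ineq _ _ Hg Hcv N). cbv beta in H. lra.
Qed.

Lemma tail_small z eps : eps > 0 -> exists N, exp z - ES N z < eps.
Proof.
  intros Heps. destruct (exp_series z eps Heps) as [N HN]. exists N.
  specialize (HN N (Nat.le_refl N)). unfold R_dist in HN. unfold ES.
  unfold Rabs in HN; destruct Rcase_abs in HN; lra.
Qed.

Lemma PM f L : density_with_laplace f L ->
  exists p : nat -> R, (forall n, improper_int0 (fun g => f g * poisson_pmf g n) (p n)) /\
    (forall n, 0 <= p n) /\
    (forall s, 0 <= s <= 1 -> infinite_sum (fun n => p n * s ^ n) (L (1 - s))).
Proof.
  intros [Hf HL].
  set (e := fun t x => exp (- (t * x)) * f x).
  assert (He : forall t, 0 <= t -> IntOK (e t) /\ conv0 (e t) (L t)).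
  { intros t Ht. apply from_improper. apply HL; auto. }
  assert (Hen : forall t, nonnegf (e t)).
  { intros t x Hx. unfold e. apply Rmult_le_pos. left; apply exp_pos. auto. }
  set (g := fun n x => f x * poisson_pmf x n).
  assert (Hgeq : forall n x, g n x = / INR (fact n) * (x ^ n * e 1 x)).
  { intros n x. unfold g, e, poisson_pmf. rewrite Rmult_1_l. field. apply INR_fact_neq_0. }
  assert (HgI : forall n, IntOK (g n)).
  { intros n. eapply IntOK_ext. intros x; symmetry; apply Hgeq.
    apply IntOK_scal, IntOK_pow, He; lra. }
  assert (Hgn : forall n, nonnegf (g n)).
  { intros n x Hx. unfold g, poisson_pmf. apply Rmult_le_pos. auto.
    apply Rdiv_le_0_compat. apply Rmult_le_pos. left; apply exp_pos. apply pow_le; lra. apply INR_fact_pos. }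
  assert (Hg0 : forall n x, 0 < x -> g n x <= e 0 x).
  { intros n x Hx. unfold g, e, poisson_pmf. rewrite Rmult_0_l, Ropp_0, exp_0, Rmult_1_l.
    pose proof (Hf x Hx).
    assert (exp (- x) * x ^ n / INR (fact n) <= 1).
    { pose proof (term_le_exp n x ltac:(lra)).
      replace 1 with (exp (- x) * exp x) by (rewrite <- exp_plus, Rplus_opp_l; apply exp_0).
      unfold Rdiv. rewrite Rmult_assoc. apply Rmult_le_compat_l. left; apply exp_pos. exact H0. }
    nra. }
  assert (Hex : forall n, exists l, conv0 (g n) l /\ 0 <= l).
  { intros n. apply (lim_exists (g n) (L 0)); auto.
    intros u v Hu Huv. destruct (He 0 ltac:(lra)) as [I0 C0].
    apply Rle_trans with (RInt (e 0) u v).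
    - apply RInt_le; auto; try (apply HgI; auto); try (apply (I0 u v); auto); intros x Hx; apply (Hg0 n x); lra.
    - apply le_lim; auto. }
  set (p := fun n => proj1_sig (constructive_indefinite_description _ (Hex n))).
  assert (Hp : forall n, conv0 (g n) (p n) /\ 0 <= p n).
  { intros n. unfold p. destruct (constructive_indefinite_description _ (Hex n)); auto. }
  exists p. split; [|split].
  - intros n. apply to_improper. apply HgI. apply Hp.
  - intros n; apply Hp.
  - intros s Hs. set (t := 1 - s).
    destruct (He t ltac:(unfold t; lra)) as [It Ct].
    destruct (He 1 ltac:(lra)) as [I1 C1].
    set (GN := fun N x => sum_f_R0 (fun n => s ^ n * g n x) N).
    assert (HGI : forall N, IntOK (GN N)).
    { intros N. apply (sum_IntOK (fun n x => s ^ n * g n x)). intros n; apply IntOK_scal; auto. }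
    assert (HGC : forall N, conv0 (GN N) (sum_f_R0 (fun n => p n * s ^ n) N)).
    { intros N. rewrite (sum_eq _ (fun n => s ^ n * p n)) by (intros; ring).
      apply (sum_conv0 (fun n x => s ^ n * g n x)). intros n; apply IntOK_scal; auto.
      intros n. apply conv0_scal; auto; apply Hp. }
    assert (HGeq : forall N x, GN N x = f x * exp (- x) * ES N (s * x)).
    { intros N x. unfold GN, ES. rewrite scal_sum. apply sum_eq. intros n _.
      unfold g, poisson_pmf. rewrite Rpow_mult_distr. field. apply INR_fact_neq_0. }
    assert (Heteq : forall x, e t x = f x * exp (- x) * exp (s * x)).
    { intros x. unfold e, t. rewrite Rmult_assoc, <- exp_plus. rewrite Rmult_comm. f_equal. f_equal. ring. }
    assert (HGn : forall N, nonnegf (GN N)).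
    { intros N x Hx. rewrite HGeq. apply Rmult_le_pos. apply Rmult_le_pos. auto. left; apply exp_pos.
      apply cond_pos_sum. intros; apply ES_terms_nonneg. nra. }
    assert (Hup : forall N, sum_f_R0 (fun n => p n * s ^ n) N <= L t).
    { intros N. apply (lim_mono (GN N) (e t)); auto.
      intros x Hx. rewrite HGeq, Heteq. apply Rmult_le_compat_l.
      apply Rmult_le_pos. apply Hf; auto. left; apply exp_pos. apply ES_le_exp. nra. }
    destruct (nonneg_cv (fun n => p n * s ^ n) (L t)) as [P [HP HPL]].
    { intros n. apply Rmult_le_pos. apply Hp. apply pow_le; lra. }
    { exact Hup. }
    assert (HL1 : 0 <= L 1).
    { apply Rle_trans with (RInt (e 1) 1 1). apply RInt_nonneg; auto; lra. apply le_lim; auto; lra. }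
    assert (Hlow : forall eps, eps > 0 -> L t < P + eps).
    { intros eps Heps.
      destruct (Ct (eps / 2)) as [dl [Hdl [M [HM HH]]]]. lra.
      set (u := dl / 2). set (v := M + 1).
      assert (Hu : 0 < u < dl) by (unfold u; lra). assert (Hv : M < v) by (unfold v; lra).
      specialize (HH u v Hu Hv).
      destruct (tail_small (s * v) (eps / (2 * (L 1 + 1)))) as [N HN].
      { apply Rdiv_lt_0_compat; lra. }
      set (T := exp (s * v) - ES N (s * v)).
      assert (HT0 : 0 <= T). { unfold T. pose proof (ES_le_exp N (s * v)). assert (0 <= s * v) by nra. lra. }
      assert (Huv : u <= v) by lra.
      assert (Hdiff : RInt (e t) u v - RInt (GN N) u v <= T * L 1).
      { rewrite <- RI_minus by (first [apply It | apply HGI]; lra).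
        apply Rle_trans with (RInt (fun x => T * e 1 x) u v).
        - apply RInt_le. lra. apply exR_minus; [apply (It u v)|apply (HGI N u v)]; lra.
          apply exR_scal, (I1 u v); lra.
          intros x Hx. rewrite HGeq, Heteq. unfold e. rewrite Rmult_1_l.
          assert (exp (s * x) - ES N (s * x) <= T) by (apply tail_mono; nra).
          assert (0 <= f x * exp (- x)) by (apply Rmult_le_pos; [apply Hf; lra | left; apply exp_pos]).
          replace (f x * exp (- x) * exp (s * x) - f x * exp (- x) * ES N (s * x))
            with (f x * exp (- x) * (exp (s * x) - ES N (s * x))) by ring.
          replace (T * (exp (- x) * f x)) with (f x * exp (- x) * T) by ring.
          apply Rmult_le_compat_l; auto.
        - rewrite RI_scal by (apply I1; lra). apply Rmult_le_compat_l; auto. apply le_lim; auto; lra. }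
      assert (HTL : T * L 1 < eps / 2).
      { apply Rle_lt_trans with (T * (L 1 + 1)). nra.
        apply Rlt_le_trans with (eps / (2 * (L 1 + 1)) * (L 1 + 1)).
        apply Rmult_lt_compat_r. lra. exact HN. right; field; lra. }
      assert (HG : RInt (GN N) u v <= P).
      { apply Rle_trans with (sum_f_R0 (fun n => p n * s ^ n) N).
        apply le_lim; auto; lra.
        apply series_nonneg_partial; auto. intros n. apply Rmult_le_pos. apply Hp. apply pow_le; lra. }
      unfold Rabs in HH; destruct Rcase_abs in HH; lra. }
    assert (P = L t).
    { destruct (Rle_dec (L t) P). lra. exfalso. specialize (Hlow (L t - P)). lra. }
    rewrite <- H. exact HP.
Qed.


Lemma HY_h a c n s : a < 0 -> 0 < c < 1 -> 0 <= s <= 1 ->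
  Rpower (1 + c * (1 - s) / (1 - c)) (a * INR n) = YY a c s ^ n.
Proof.
  intros Ha Hc Hs.
  replace (1 + c * (1 - s) / (1 - c)) with (/ ((1 - c) / (1 - c * s))) by (field; split; nra).
  rewrite Rpower_inv by (apply Rdiv_lt_0_compat; nra).
  unfold YY. rewrite <- Rpower_pow by apply Rpower_pos. rewrite Rpower_mult. f_equal. ring.
Qed.

Lemma part_iii a b c d : a < 0 -> 0 < b -> 0 < c < 1 -> 0 < d ->
  (forall (f1 : R -> R) (h : nat -> R -> R),
     density_with_laplace f1 (fun t => Rpower (1 + b * d * Rpower (1 - c) a * t) (- (1 / d))) ->
     (forall n, (1 <= n)%nat ->
        density_with_laplace (h n) (fun t => Rpower (1 + c * t / (1 - c)) (a * INR n))) ->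
     exists (pN : nat -> R) (q : nat -> nat -> R) (pX : nat -> R),
       (forall n, improper_int0 (fun g => f1 g * poisson_pmf g n) (pN n)) /\
       (forall k, q O k = dirac0 k) /\
       (forall n k, (1 <= n)%nat ->
          improper_int0 (fun y => h n y * poisson_pmf y k) (q n k)) /\
       (forall k, infinite_sum (fun n => pN n * q n k) (pX k)) /\
       has_pgf pX (tdl_pgf a b c d)).
Proof.
  intros Ha Hb Hc Hd f1 h Hf1 Hh.
  destruct (PM _ _ Hf1) as [pN [HN1 [HN2 HN3]]].
  assert (Hq : forall n, exists qn : nat -> R, (1 <= n)%nat ->
     (forall k, improper_int0 (fun y => h n y * poisson_pmf y k) (qn k)) /\ (forall k, 0 <= qn k) /\
     (forall s, 0 <= s <= 1 -> infinite_sum (fun k => qn k * s ^ k)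
          (Rpower (1 + c * (1 - s) / (1 - c)) (a * INR n)))).
  { intros n. destruct (le_lt_dec 1 n) as [Hn|Hn].
    - destruct (PM _ _ (Hh n Hn)) as [qn Hqn]. exists qn. intros _. exact Hqn.
    - exists (fun _ => 0). intros; lia. }
  set (qf := fun n => proj1_sig (constructive_indefinite_description _ (Hq n))).
  assert (Hqf : forall n, (1 <= n)%nat ->
     (forall k, improper_int0 (fun y => h n y * poisson_pmf y k) (qf n k)) /\ (forall k, 0 <= qf n k) /\
     (forall s, 0 <= s <= 1 -> infinite_sum (fun k => qf n k * s ^ k)
          (Rpower (1 + c * (1 - s) / (1 - c)) (a * INR n)))).
  { intros n Hn. unfold qf. destruct (constructive_indefinite_description _ (Hq n)) as [qn Hqn]. simpl. auto. }
  set (q := fun n k => match n with O => dirac0 k | S _ => qf n k end).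
  destruct (mixture pN (fun y => Rpower (1 + b * d * Rpower (1 - c) a * (1 - y)) (- (1 / d))) q (YY a c))
    as [pX [HX1 HX2]].
  - auto.
  - intros y Hy. apply HN3; auto.
  - intros n k. destruct n; simpl.
    + unfold dirac0. destruct (Nat.eqb k 0); lra.
    + apply (Hqf (S n)); lia.
  - intros n s Hs. destruct n.
    + apply dirac0_pgf.
    + rewrite <- (HY_h a c (S n) s) by auto. apply (Hqf (S n)); auto; lia.
  - apply YY01; auto.
  - exists pN, q, pX. split; [|split; [|split; [|split]]].
    + auto.
    + intros; reflexivity.
    + intros n k Hn. destruct n. lia. simpl. apply (Hqf (S n)); auto.
    + auto.
    + intros s Hs. rewrite tdl_eq by auto. unfold BB. apply HX2; auto.
Qed.


Theorem mainTheorem11 (a b c d : R) :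
  a < 0 -> 0 < b -> 0 < c < 1 -> 0 < d ->
  (* (i) random sum of iid NB(c,-a) with NB(pi0,1/d) many terms *)
  (exists pS : nat -> R,
     (forall k, infinite_sum
        (fun n => nb_pmf (pi0 a b c d) (1 / d) n * convpow (nb_pmf c (- a)) n k) (pS k))
     /\ has_pgf pS (tdl_pgf a b c d))
  /\
  (* (ii) mixture: X | Z ~ NB(c, -a Z) *)
  (exists pX : nat -> R,
     (forall k, infinite_sum
        (fun n => nb_pmf (pi0 a b c d) (1 / d) n * nb_pmf c (- a * INR n) k) (pX k))
     /\ has_pgf pX (tdl_pgf a b c d))
  /\
  (* (iii) Poisson - Gamma - Poisson - Gamma hierarchy *)
  (forall (f1 : R -> R) (h : nat -> R -> R),
     density_with_laplace f1 (fun t => Rpower (1 + b * d * Rpower (1 - c) a * t) (- (1 / d))) ->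
     (forall n, (1 <= n)%nat ->
        density_with_laplace (h n) (fun t => Rpower (1 + c * t / (1 - c)) (a * INR n))) ->
     exists (pN : nat -> R) (q : nat -> nat -> R) (pX : nat -> R),
       (forall n, improper_int0 (fun g => f1 g * poisson_pmf g n) (pN n)) /\
       (forall k, q O k = dirac0 k) /\
       (forall n k, (1 <= n)%nat ->
          improper_int0 (fun y => h n y * poisson_pmf y k) (q n k)) /\
       (forall k, infinite_sum (fun n => pN n * q n k) (pX k)) /\
       has_pgf pX (tdl_pgf a b c d)).
Proof.
  intros Ha Hb Hc Hd. split; [|split].
  - apply part_i; auto.
  - apply part_ii; auto.
  - apply part_iii; auto.
Qed.
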